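(* Fix finite nonempty $A$, $\Omega$, a full-support prior $\mu_0$ on $\Omega$, and a finite $M$ with $|M|>\max\{|\Omega|,|A|\}$. There is a set of transparent environments of Lebesgue measure one in $[0,1]^{|A|(|\Omega|+1)}$ such that, for every environment in it, commitment is valuable if and only if committed Sender values randomization.
   Context: An environment $(u_S,u_R)$ with $u_S,u_R:A\times\Omega\to[0,1]$ is transparent if there is $v:A\to[0,1]$ with $u_S(a,\omega)=v(a)$ for all $a,\omega$; the set of transparent environments is identified with $[0,1]^{|A|(|\Omega|+1)}$ (coordinates $v$ and $u_R$). Messaging strategies $\sigma:\Omega\to\Delta M$, action strategies $\rho:M\to\Delta A$, $U_i(\sigma,\rho)=\sum_{\omega,m,a}\mu_0(\omega)\sigma(m|\omega)\rho(a|m)u_i(a,\omega)$. $(\sigma,\rho)$ is S-BR if $\sigma\in\arg\max_{\sigma'}U_S(\sigma',\rho)$ and R-BR if $\rho\in\arg\max_{\rho'}U_R(\sigma,\rho')$. Persuasion payoff: max of $U_S$ over R-BR profiles; cheap-talk payoff: max over profiles that are S-BR and R-BR. Commitment is valuable if persuasion payoff > cheap-talk payoff. $\sigma$ is partitional if for every $\omega$ some $m$ has $\sigma(m|\omega)=1$. Partitional persuasion payoff: max of $U_S$ over R-BR profiles with partitional $\sigma$. Committed Sender values randomization if persuasion payoff > partitional persuasion payoff. *)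

(* Defs.v *)
From mathcomp Require Import all_boot all_order all_algebra.
From mathcomp Require Import boolp classical_sets reals.
Set Implicit Arguments. Unset Strict Implicit. Unset Printing Implicit Defensive.
Import Order.TTheory GRing.Theory Num.Theory.
Local Open Scope ring_scope.

Section Game.
Variables (R : realType) (A Om M : finType).

Definition is_distr (T : finType) (p : T -> R) :=
  (forall t, 0 <= p t) /\ \sum_(t : T) p t = 1.

(** Messaging strategies sigma : Omega -> Delta M, written sigma w m = sigma(m|w);
    action strategies rho : M -> Delta A, written rho m a = rho(a|m). *)
Definition msg_strategy (sigma : Om -> M -> R) := forall w, is_distr (sigma w).
Definition act_strategy (rho : M -> A -> R) := forall m, is_distr (rho m).

Definition U (mu0 : Om -> R) (u : A -> Om -> R)
  (sigma : Om -> M -> R) (rho : M -> A -> R) : R :=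
  \sum_(w : Om) \sum_(m : M) \sum_(a : A) mu0 w * sigma w m * rho m a * u a w.

Definition S_BR mu0 uS sigma rho :=
  msg_strategy sigma /\ act_strategy rho /\
  forall sigma', msg_strategy sigma' -> U mu0 uS sigma' rho <= U mu0 uS sigma rho.

Definition R_BR mu0 uR sigma rho :=
  msg_strategy sigma /\ act_strategy rho /\
  forall rho', act_strategy rho' -> U mu0 uR sigma rho' <= U mu0 uR sigma rho.

Definition partitional (sigma : Om -> M -> R) :=
  forall w, exists m, sigma w m = 1.

(** Payoffs (the maxima of the paper, written as suprema; the maxima exist). *)
Definition persuasion_payoff mu0 uS uR : R :=
  sup [set x | exists sigma rho, R_BR mu0 uR sigma rho /\ x = U mu0 uS sigma rho].

Definition cheap_talk_payoff mu0 uS uR : R :=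
  sup [set x | exists sigma rho,
         S_BR mu0 uS sigma rho /\ R_BR mu0 uR sigma rho /\ x = U mu0 uS sigma rho].

Definition partitional_persuasion_payoff mu0 uS uR : R :=
  sup [set x | exists sigma rho, R_BR mu0 uR sigma rho /\ partitional sigma /\
                                 x = U mu0 uS sigma rho].

Definition commitment_valuable mu0 uS uR :=
  cheap_talk_payoff mu0 uS uR < persuasion_payoff mu0 uS uR.

Definition values_randomization mu0 uS uR :=
  partitional_persuasion_payoff mu0 uS uR < persuasion_payoff mu0 uS uR.

(** Transparent environments: coordinates indexed by A + A * Omega,
    x (inl a) = v a and x (inr (a, w)) = u_R (a, w). *)
Definition env_coord := (A + (A * Om))%type.
Definition env_v (x : env_coord -> R) : A -> Om -> R := fun a _ => x (inl a).
Definition env_uR (x : env_coord -> R) : A -> Om -> R := fun a w => x (inr (a, w)).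

End Game.

Section Lebesgue.
Variables (R : realType) (I : finType).

Definition unit_cube (x : I -> R) := forall i, 0 <= x i <= 1.
Definition in_box (a b x : I -> R) := forall i, a i <= x i <= b i.
Definition box_vol (a b : I -> R) : R := \prod_(i : I) (b i - a i).

Definition lebesgue_null (N : (I -> R) -> Prop) :=
  forall eps : R, 0 < eps -> exists (a b : nat -> I -> R),
    (forall k i, a k i <= b k i) /\
    (forall x, N x -> exists k, in_box (a k) (b k) x) /\
    (forall n, \sum_(k < n) box_vol (a k) (b k) <= eps).

(** E has Lebesgue measure one in [0,1]^I: E is a subset of the cube whose
    complement in the cube is null (hence E is measurable of measure 1). *)
Definition full_measure_in_cube (E : (I -> R) -> Prop) :=
  (forall x, E x -> unit_cube x) /\
  lebesgue_null (fun x => unit_cube x /\ ~ E x).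
End Lebesgue.

(* Main.v *)
Require Import Defs.
From mathcomp Require Import all_boot all_order all_algebra.
From mathcomp Require Import boolp classical_sets reals.
From mathcomp Require Import ring lra.
Set Implicit Arguments. Unset Strict Implicit. Unset Printing Implicit Defensive.
Import Order.TTheory GRing.Theory Num.Theory.
Local Open Scope ring_scope.

Section Aux.
Variable R : realType.

Lemma argmax_seq (T : eqType) (P : T -> Prop) (f : T -> R) (s : seq T) :
  (exists t, t \in s /\ P t) ->
  exists t, P t /\ forall t', t' \in s -> P t' -> f t' <= f t.
Proof.
elim: s => [[t [] //]|x s IH] [t [ts Pt]].
have [[y [Py hy]]|hn] := pselect (exists t, t \in s /\ P t).
  have [z [Pz hz]] := IH (ex_intro _ y (conj Py hy)).
  have [Px|nPx] := pselect (P x).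
    have [le|lt] := leP (f x) (f z).
      exists z; split => // t'; rewrite inE => /orP [/eqP -> //|]; exact: hz.
    exists x; split => // t'; rewrite inE => /orP [/eqP -> //|ts' Pt'].
    by apply: le_trans (hz _ ts' Pt') (ltW lt).
  exists z; split => // t'; rewrite inE => /orP [/eqP -> //|]; exact: hz.
have Px : P x.
  move: ts; rewrite inE => /orP [/eqP <- //|ts]; exfalso; apply: hn; by exists t.
exists x; split => // t'; rewrite inE => /orP [/eqP -> //|ts' Pt'].
exfalso; apply: hn; by exists t'.
Qed.

Lemma argmax_fin (T : finType) (P : T -> Prop) (f : T -> R) :
  (exists t, P t) -> exists t, P t /\ forall t', P t' -> f t' <= f t.
Proof.
move=> [t Pt]; have [z [Pz hz]] := @argmax_seq T P f (enum T)
  (ex_intro _ t (conj (mem_enum T t) Pt)).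
exists z; split => // t' Pt'; apply: hz => //; exact: mem_enum.
Qed.

Lemma lower_fin (T : finType) (P : T -> Prop) (f : T -> R) :
  (forall t, P t -> 0 < f t) -> exists e, 0 < e /\ forall t, P t -> e <= f t.
Proof.
move=> hpos; have [[t Pt]|hn] := pselect (exists t, P t); last first.
  exists 1; split => // t Pt; exfalso; apply: hn; by exists t.
have [z [Pz hz]] := @argmax_fin T P (fun t => - f t) (ex_intro _ t Pt).
exists (f z); split; first exact: hpos.
by move=> t' Pt'; rewrite -lerN2; apply: hz.
Qed.
End Aux.

Lemma bR (R : realType) (b : bool) : (b%:R : R) = if b then 1 else 0.
Proof. by case: b. Qed.

Section Game.
Variables (R : realType) (A Om M : finType) (mu0 : Om -> R).
Hypothesis hmu0 : forall w, 0 < mu0 w.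
Hypothesis hmu1 : \sum_(w : Om) mu0 w = 1.
Implicit Types (s : Om -> M -> R) (r : M -> A -> R).

Definition mass (s : Om -> M -> R) m := \sum_(w : Om) mu0 w * s w m.
Definition gen (s : Om -> M -> R) m (h : Om -> R) := \sum_(w : Om) mu0 w * s w m * h w.
Definition pm (f : M -> A) : M -> A -> R := fun m a => (a == f m)%:R.
Definition cmsg (m0 : M) : Om -> M -> R := fun _ m => (m == m0)%:R.

Lemma U_alt (u : A -> Om -> R) s r : U mu0 u s r = \sum_(m : M) \sum_(a : A) r m a * gen s m (u a).
Proof.
rewrite /U exchange_big; apply: eq_bigr => m _; rewrite exchange_big.
apply: eq_bigr => a _; rewrite /gen mulr_sumr; apply: eq_bigr => w _; ring.
Qed.

Lemma gen_const s m c : gen s m (fun _ => c) = mass s m * c.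
Proof. by rewrite /gen /mass mulr_suml. Qed.

Lemma U_transp (v : A -> R) s r :
  U mu0 (fun a _ => v a) s r = \sum_(m : M) mass s m * \sum_(a : A) r m a * v a.
Proof.
rewrite U_alt; apply: eq_bigr => m _; rewrite mulr_sumr; apply: eq_bigr => a _.
rewrite gen_const; ring.
Qed.

Lemma sum_pm f m (F : A -> R) : \sum_(a : A) pm f m a * F a = F (f m).
Proof.
rewrite (bigD1 (f m)) //= /pm eqxx mul1r big1 ?addr0 // => a /negbTE ->.
by rewrite mul0r.
Qed.

Lemma pm_act f : act_strategy (pm f).
Proof.
move=> m; split; first by move=> a; rewrite /pm ler0n.
by have := sum_pm f m (fun _ => 1); under eq_bigr do rewrite mulr1.
Qed.

Lemma cmsg_msg m0 : msg_strategy (cmsg m0).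
Proof.
move=> w; split; first by move=> m; rewrite /cmsg ler0n.
rewrite (bigD1 m0) //= /cmsg eqxx big1 ?addr0 // => m /negbTE -> //.
Qed.

Lemma mass_cmsg m0 m : mass (cmsg m0) m = (m == m0)%:R.
Proof. by rewrite /mass /cmsg -mulr_suml hmu1 mul1r. Qed.

Lemma mass_ge0 s m : msg_strategy s -> 0 <= mass s m.
Proof.
move=> hs; apply: sumr_ge0 => w _; apply: mulr_ge0; first exact: ltW.
by case: (hs w) => h _; apply: h.
Qed.

Lemma mass_sum s : msg_strategy s -> \sum_(m : M) mass s m = 1.
Proof.
move=> hs; rewrite /mass exchange_big /= -hmu1; apply: eq_bigr => w _.
by rewrite -mulr_sumr; case: (hs w) => _ ->; rewrite mulr1.
Qed.

Lemma mass_le1 s m : msg_strategy s -> mass s m <= 1.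
Proof.
move=> hs; rewrite -(mass_sum hs) (bigD1 m) //= lerDl.
by apply: sumr_ge0 => m' _; apply: mass_ge0.
Qed.

Lemma gen_bounds s m h : msg_strategy s -> (forall w, 0 <= h w <= 1) ->
  0 <= gen s m h <= mass s m.
Proof.
move=> hs hh; apply/andP; split.
  apply: sumr_ge0 => w _; apply: mulr_ge0; last by case/andP: (hh w).
  apply: mulr_ge0; first exact: ltW. by case: (hs w) => h0 _; apply: h0.
apply: ler_sum => w _; apply: ler_piMr; last by case/andP: (hh w).
apply: mulr_ge0; first exact: ltW. by case: (hs w) => h0 _; apply: h0.
Qed.

Lemma gen_mass0 s m h : msg_strategy s -> mass s m = 0 -> gen s m h = 0.
Proof.
move=> hs h0; apply: big1 => w _.
have hw : mu0 w * s w m = 0.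
  apply: (psumr_eq0P _ h0) => // w' _; apply: mulr_ge0; first exact: ltW.
  by case: (hs w') => h1 _; apply: h1.
by rewrite hw mul0r.
Qed.

Lemma pointwise_RBR (u : A -> Om -> R) s f : msg_strategy s ->
  (forall m b, gen s m (u b) <= gen s m (u (f m))) -> R_BR mu0 u s (pm f).
Proof.
move=> hs hf; split => //; split; first exact: pm_act.
move=> r hr; rewrite !U_alt; apply: ler_sum => m _; rewrite sum_pm.
apply: (@le_trans _ _ (\sum_(a : A) r m a * gen s m (u (f m)))).
  apply: ler_sum => a _; apply: ler_wpM2l; last exact: hf.
  by case: (hr m) => h _; apply: h.
by rewrite -mulr_suml; case: (hr m) => _ ->; rewrite mul1r.
Qed.

Lemma RBR_support (u : A -> Om -> R) s r f : R_BR mu0 u s r ->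
  (forall m b, gen s m (u b) <= gen s m (u (f m))) ->
  forall m a, r m a != 0 -> gen s m (u a) = gen s m (u (f m)).
Proof.
move=> [hs [hr hbr]] hf m a hra.
have := hbr _ (pm_act f); rewrite !U_alt.
set H := fun m a => r m a * (gen s m (u (f m)) - gen s m (u a)).
have hH : forall m a, 0 <= H m a.
  move=> m' a'; apply: mulr_ge0; first by case: (hr m') => h _; apply: h.
  by rewrite subr_ge0.
have eq1 : forall m, \sum_(a : A) pm f m a * gen s m (u a) -
   \sum_(a : A) r m a * gen s m (u a) = \sum_(a : A) H m a.
  move=> m'; rewrite sum_pm /H.
  under [in RHS]eq_bigr do rewrite mulrBr.
  by rewrite sumrB -mulr_suml; case: (hr m') => _ ->; rewrite mul1r.
move=> hle.
have hsum : \sum_(m : M) \sum_(a : A) H m a = 0.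
  apply/le_anti/andP; split; last by apply: sumr_ge0 => m' _; apply: sumr_ge0.
  under eq_bigr do rewrite -eq1.
  by rewrite sumrB subr_le0.
have hm : \sum_(a : A) H m a = 0.
  by apply: (psumr_eq0P _ hsum) => // m' _; apply: sumr_ge0.
have : H m a = 0 by apply: (psumr_eq0P _ hm).
rewrite /H => /eqP; rewrite mulf_eq0 (negbTE hra) /= subr_eq0 => /eqP.
by move=> <-.
Qed.

Lemma sum_ind_mul (m1 : M) (F : M -> R) : \sum_(m : M) (m == m1)%:R * F m = F m1.
Proof.
rewrite (bigD1 m1) //= eqxx mul1r big1 ?addr0 // => m /negbTE ->.
by rewrite mul0r.
Qed.

Lemma sum_ind (m1 : M) : \sum_(m : M) (m == m1)%:R = 1 :> R.
Proof. by have := sum_ind_mul m1 (fun _ => 1); under eq_bigr do rewrite mulr1. Qed.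

Lemma U_pm (v : A -> R) s f :
  U mu0 (fun a _ => v a) s (pm f) = \sum_(m : M) mass s m * v (f m).
Proof. by rewrite U_transp; apply: eq_bigr => m _; rewrite sum_pm. Qed.

Lemma U_const (v : A -> R) s a : msg_strategy s ->
  U mu0 (fun a _ => v a) s (pm (fun _ => a)) = v a.
Proof. by move=> hs; rewrite U_pm -mulr_suml mass_sum // mul1r. Qed.

Lemma gen_sum s h : msg_strategy s -> \sum_(m : M) gen s m h = \sum_(w : Om) mu0 w * h w.
Proof.
move=> hs; rewrite /gen exchange_big /=; apply: eq_bigr => w _.
under eq_bigr do rewrite mulrAC.
by rewrite -mulr_sumr; case: (hs w) => _ ->; rewrite mulr1.
Qed.

Lemma part01 s w m : msg_strategy s -> partitional s -> s w m = 1 \/ s w m = 0.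
Proof.
move=> hs hp; have [m' h1] := hp w.
have [->|nm] := eqVneq m m'; first by left.
right; case: (hs w) => h0 hsum.
have : \sum_(m'' | m'' != m') s w m'' = 0.
  by move: hsum; rewrite (bigD1 m') //= h1 -{2}[1]addr0 => /addrI.
move=> hz; exact: (psumr_eq0P (fun i _ => h0 i) hz).
Qed.

Lemma gen_part s m h : msg_strategy s -> partitional s ->
  gen s m h = \sum_(w in finset (fun w => s w m == 1)) mu0 w * h w.
Proof.
move=> hs hp; rewrite /gen [RHS]big_mkcond /=; apply: eq_bigr => w _.
rewrite inE; case: (part01 w m hs hp) => ->; rewrite ?eqxx ?mulr1 //.
by rewrite (_ : (0 == 1 :> R) = false) ?mulr0 ?mul0r // eq_sym oner_eq0.
Qed.

Lemma mass_pos_used s m : msg_strategy s -> partitional s -> mass s m != 0 ->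
  exists w, s w m = 1.
Proof.
move=> hs hp hm; have [//|hn] := pselect (exists w, s w m = 1).
exfalso; move/negP: hm; apply; apply/eqP; apply: big1 => w _.
case: (part01 w m hs hp) => [h1|->]; last by rewrite mulr0.
by exfalso; apply: hn; exists w.
Qed.

Lemma mass_ge_term s m w : msg_strategy s -> mu0 w * s w m <= mass s m.
Proof.
move=> hs; rewrite /mass (bigD1 w) //= lerDl; apply: sumr_ge0 => w' _.
apply: mulr_ge0; first exact: ltW. by case: (hs w') => h _; apply: h.
Qed.

Section Env.
Variables (v : A -> R) (u : A -> Om -> R).
Hypothesis hv : forall a, 0 <= v a <= 1.
Hypothesis hu : forall a w, 0 <= u a w <= 1.
Hypothesis hinj : forall a a', a != a' -> v a != v a'.
Hypothesis hgen : forall (C : {set Om}) a a', (0 < #|C|)%N -> a != a' ->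
  \sum_(w in C) mu0 w * (u a w - u a' w) != 0.
Variable m0 : M.
Variable aI : A.
Variable wI : Om.

Let V : A -> Om -> R := fun a _ => v a.

Lemma U_le1 s r : msg_strategy s -> act_strategy r -> U mu0 V s r <= 1.
Proof.
move=> hs hr; rewrite U_transp -(mass_sum hs); apply: ler_sum => m _.
rewrite -[X in _ <= X]mulr1; apply: ler_wpM2l; first exact: mass_ge0.
case: (hr m) => h0 <-; apply: ler_sum => a _; rewrite -[X in _ <= X]mulr1.
by apply: ler_wpM2l; [apply: h0|case/andP: (hv a)].
Qed.

Lemma gen_cmsg m h : gen (cmsg m0) m h = (m == m0)%:R * \sum_(w : Om) mu0 w * h w.
Proof. by rewrite /gen /cmsg mulr_sumr; apply: eq_bigr => w _; ring. Qed.

Lemma babble : exists a0, (forall b, \sum_(w : Om) mu0 w * u b w <= \sum_(w : Om) mu0 w * u a0 w)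
  /\ R_BR mu0 u (cmsg m0) (pm (fun _ => a0)) /\ S_BR mu0 V (cmsg m0) (pm (fun _ => a0))
  /\ partitional (cmsg m0) /\ U mu0 V (cmsg m0) (pm (fun _ => a0)) = v a0.
Proof.
have [a0 [_ ha0]] := @argmax_fin R A (fun _ => True) (fun b => \sum_(w : Om) mu0 w * u b w)
  (ex_intro _ aI I).
exists a0; split; first by move=> b; apply: ha0.
split.
  apply: pointwise_RBR; first exact: cmsg_msg.
  move=> m b; rewrite !gen_cmsg; apply: ler_wpM2l; first exact: ler0n.
  exact: ha0.
split.
  split; first exact: cmsg_msg. split; first exact: pm_act.
  by move=> s' hs'; rewrite !U_const //; exact: cmsg_msg.
split; first by move=> w; exists m0; rewrite /cmsg eqxx.
by rewrite U_const //; exact: cmsg_msg.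
Qed.


Definition SP : set R := [set x | exists (sigma : Om -> M -> R) rho, R_BR mu0 u sigma rho /\ x = U mu0 V sigma rho].
Definition SC : set R := [set x | exists (sigma : Om -> M -> R) rho,
         S_BR mu0 V sigma rho /\ R_BR mu0 u sigma rho /\ x = U mu0 V sigma rho].
Definition SPP : set R := [set x | exists (sigma : Om -> M -> R) rho, R_BR mu0 u sigma rho /\ partitional sigma /\
                                 x = U mu0 V sigma rho].

Lemma hsP : has_sup SP.
Proof.
have [a0 [_ [hR0 [_ [_ hU0]]]]] := babble.
split; first by exists (v a0), (cmsg m0), (pm (fun _ => a0)); split => //; rewrite hU0.
exists 1 => y [s [r [[hs [hr _]] ->]]]; exact: U_le1.
Qed.

Lemma hsC : has_sup SC.
Proof.
have [a0 [_ [hR0 [hS0 [_ hU0]]]]] := babble.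
split; first by exists (v a0), (cmsg m0), (pm (fun _ => a0)); split => //; rewrite hU0.
exists 1 => y [s [r [_ [[hs [hr _]] ->]]]]; exact: U_le1.
Qed.

Lemma hsPP : has_sup SPP.
Proof.
have [a0 [_ [hR0 [hS0 [hp0 hU0]]]]] := babble.
split; first by exists (v a0), (cmsg m0), (pm (fun _ => a0)); split => //; rewrite hU0.
exists 1 => y [s [r [[hs [hr _]] [_ ->]]]]; exact: U_le1.
Qed.

Lemma const_G : exists G, 0 < G /\ forall a a', a != a' -> G <= `|v a - v a'|.
Proof.
have [G [G0 hG]] := @lower_fin R (A * A)%type (fun t => t.1 != t.2)
  (fun t => `|v t.1 - v t.2|) (fun t ht => ltac:(by rewrite normr_gt0 subr_eq0 hinj)).
by exists G; split => // a a' h; apply: (hG (a, a')).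
Qed.

Lemma const_eta : exists eta, 0 < eta /\ forall (C : {set Om}) a a', (0 < #|C|)%N -> a != a' ->
  eta <= `|\sum_(w in C) mu0 w * (u a w - u a' w)|.
Proof.
have [e [e0 he]] := @lower_fin R ({set Om} * A * A)%type
  (fun t => (0 < #|t.1.1|)%N /\ t.1.2 != t.2)
  (fun t => `|\sum_(w in t.1.1) mu0 w * (u t.1.2 w - u t.2 w)|)
  (fun t ht => ltac:(by rewrite normr_gt0; apply: hgen; case: ht)).
by exists e; split => // C a a' h1 h2; apply: (he (C, a, a')).
Qed.

Lemma const_mu : exists mm, 0 < mm /\ forall w, mm <= mu0 w.
Proof.
have [e [e0 he]] := @lower_fin R Om (fun _ => True) mu0 (fun w _ => hmu0 w).
by exists e; split => // w; apply: he.
Qed.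

Lemma exists_used s : msg_strategy s -> exists m1, mass s m1 != 0.
Proof.
move=> hs; have [//|hn] := pselect (exists m1, mass s m1 != 0).
exfalso; have : \sum_(m : M) mass s m = 0.
  apply: big1 => m _; have [//|hm] := eqVneq (mass s m) 0.
  by exfalso; apply: hn; exists m.
by rewrite mass_sum // => /eqP; rewrite oner_eq0.
Qed.

Lemma dir1 : sup SP <= sup SPP -> sup SP <= sup SC.
Proof.
move=> hle.
have [G [G0 hG]] := const_G.
have [eta [eta0 heta]] := const_eta.
have [mum [mum0 hmum]] := const_mu.
pose eps := Num.min eta 1.
have eps0 : 0 < eps by rewrite lt_min eta0 ltr01.
have epseta : eps <= eta by rewrite ge_min lexx.
have eps1 : eps <= 1 by rewrite ge_min lexx orbT.
clearbody eps.
pose gam := eps * mum * G.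
have gam0 : 0 < gam by rewrite !mulr_gt0.
apply/ler_addgt0Pr => del del0.
pose d := Num.min del gam.
have d0 : 0 < d by rewrite lt_min del0 gam0.
have ddel : d <= del by rewrite ge_min lexx.
have dgam : d <= gam by rewrite ge_min lexx orbT.
clearbody d.
have [W [s [r [hRBR [hp ->]]]] hW] := sup_adherent d0 hsPP.
have [hs [hr hbr]] := hRBR.
have [f hf] : exists f : M -> A, forall m b, gen s m (u b) <= gen s m (u (f m)).
  have h := fun m => @argmax_fin R A (fun _ => True) (fun b => gen s m (u b)) (ex_intro _ aI I).
  case: (choice h) => f hf'; exists f => m b; by case: (hf' m) => _ H; apply: H.
have hA : forall m b, mass s m != 0 -> b != f m -> eta <= gen s m (u (f m)) - gen s m (u b).
  move=> m b hm hb; have [w hw] := mass_pos_used hs hp hm.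
  have hC : (0 < #|finset (fun w => s w m == 1%R)|)%N.
    by apply/card_gt0P; exists w; rewrite inE hw eqxx.
  have hb' : f m != b by rewrite eq_sym.
  have := heta _ _ _ hC hb'.
  have hd := hf m b.
  rewrite !(gen_part _ _ hs hp) in hd *.
  under eq_bigr do rewrite mulrBr.
  by rewrite sumrB ger0_norm ?subr_ge0.
have hB : U mu0 V s r = \sum_(m : M) mass s m * v (f m).
  rewrite U_transp; apply: eq_bigr => m _.
  have [->|hm] := eqVneq (mass s m) 0; first by rewrite !mul0r.
  congr (_ * _); rewrite -[RHS]mul1r; case: (hr m) => h0 <-; rewrite mulr_suml.
  apply: eq_bigr => a _.
  have [->|hra] := eqVneq (r m a) 0; first by rewrite !mul0r.
  have [<-//|hb] := eqVneq a (f m).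
  have := hA m a hm hb; rewrite (RBR_support hRBR hf hra) subrr => h.
  by exfalso; move: (lt_le_trans eta0 h); rewrite ltxx.
have hC : forall m1 m2, mass s m1 != 0 -> mass s m2 != 0 -> v (f m2) < v (f m1) -> False.
  move=> m1 m2 h1 h2 hlt.
  have m12 : m1 != m2 by apply/eqP => e; subst; rewrite ltxx in hlt.
  have m21 : m2 != m1 by rewrite eq_sym.
  pose s' := fun w m => s w m + eps * s w m2 * ((m == m1)%:R - (m == m2)%:R).
  have hs' : msg_strategy s'.
    move=> w; case: (hs w) => h0 hsum; split.
      move=> m; rewrite /s' !bR; have := h0 m; have := h0 m2.
      have [->|n1] := eqVneq m m1.
        rewrite ?eqxx ?(negbTE m12) /= subr0 mulr1 => ha hb.
        by apply: addr_ge0 => //; apply: mulr_ge0 => //; apply: ltW.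
      have [->|n2] := eqVneq m m2.
        rewrite ?eqxx ?(negbTE m21) /= sub0r => ha hb; nra.
      by rewrite ?(negbTE n1) ?(negbTE n2) /= subrr mulr0 addr0.
    by rewrite /s' big_split /= -mulr_sumr sumrB !sum_ind subrr mulr0 addr0.
  have gen' : forall m h, gen s' m h =
      gen s m h + eps * ((m == m1)%:R - (m == m2)%:R) * gen s m2 h.
    move=> m h; rewrite /gen mulr_sumr -big_split /=; apply: eq_bigr => w _; rewrite /s'; ring.
  have mass' : forall m, mass s' m =
      mass s m + eps * ((m == m1)%:R - (m == m2)%:R) * mass s m2.
    move=> m; rewrite /mass mulr_sumr -big_split /=; apply: eq_bigr => w _; rewrite /s'; ring.
  have bnd : forall m h, (forall w, 0 <= h w <= 1) -> 0 <= gen s m h <= mass s m.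
    by move=> m h hh; apply: gen_bounds.
  have hm2le := mass_le1 m2 hs.
  have hR' : R_BR mu0 u s' (pm f).
    apply: pointwise_RBR => // m b; rewrite !gen' !bR.
    have [->|n1] := eqVneq m m1.
      rewrite ?eqxx ?(negbTE m12) /= subr0 mulr1.
      have [->|nb] := eqVneq b (f m1); first by [].
      have := hA m1 b h1 nb.
      have /andP[? ?] := bnd m2 (u b) (hu b).
      have /andP[? ?] := bnd m2 (u (f m1)) (hu (f m1)).
      move=> ?; nra.
    have [->|n2] := eqVneq m m2.
      rewrite ?eqxx ?(negbTE m21) /= sub0r.
      have := hf m2 b; nra.
    rewrite ?(negbTE n1) ?(negbTE n2) /= subrr mulr0 !mul0r !addr0; exact: hf.
  have inSP : U mu0 V s' (pm f) <= sup SP.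
    by apply: (sup_upper_bound hsP); exists s', (pm f).
  have eqv : U mu0 V s' (pm f) =
      \sum_(m : M) mass s m * v (f m) + eps * mass s m2 * (v (f m1) - v (f m2)).
    rewrite U_pm (eq_bigr (fun m => mass s m * v (f m) + eps * mass s m2 *
      ((m == m1)%:R * v (f m) - (m == m2)%:R * v (f m)))); last first.
      by move=> m _; rewrite mass'; ring.
    by rewrite big_split /= -mulr_sumr sumrB !sum_ind_mul.
  have hmass2 : mum <= mass s m2.
    have [w hw] := mass_pos_used hs hp h2.
    apply: le_trans (hmum w) _; have := mass_ge_term m2 w hs; by rewrite hw mulr1.
  have hdiff : G <= v (f m1) - v (f m2).
    have hne : f m1 != f m2 by apply/eqP => e; rewrite e ltxx in hlt.
    by have := hG _ _ hne; rewrite ger0_norm // subr_ge0 ltW.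
  have hprod : gam <= eps * mass s m2 * (v (f m1) - v (f m2)).
    rewrite /gam; apply: ler_pM; [|exact: ltW|by rewrite ler_pM2l|exact: hdiff].
    by apply: mulr_ge0; apply: ltW.
  move: inSP; rewrite eqv -hB => inSP.
  have : sup SP < sup SP by lra.
  by rewrite ltxx.
have hC' : forall m1 m2, mass s m1 != 0 -> mass s m2 != 0 -> f m1 = f m2.
  move=> m1 m2 h1 h2; case: (ltgtP (v (f m1)) (v (f m2))) => [lt|lt|e].
  - by exfalso; apply: (hC m2 m1).
  - by exfalso; apply: (hC m1 m2).
  - apply/eqP; apply: contraT => hn; by have := hinj hn; rewrite e eqxx.
have [m1 hm1] := exists_used hs.
pose a := f m1.
have hval : U mu0 V s r = v a.
  rewrite hB; transitivity (\sum_(m : M) mass s m * v a); last first.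
    by rewrite -mulr_suml mass_sum // mul1r.
  apply: eq_bigr => m _; have [->|hm] := eqVneq (mass s m) 0; first by rewrite !mul0r.
  by rewrite /a (hC' m m1).
have hR2 : R_BR mu0 u s (pm (fun _ => a)).
  apply: pointwise_RBR => // m b.
  have [hm|hm] := eqVneq (mass s m) 0; first by rewrite !gen_mass0.
  rewrite /a -(hC' m m1) //; exact: hf.
have hS2 : S_BR mu0 V s (pm (fun _ => a)).
  split => //; split; first exact: pm_act.
  by move=> s' hs'; rewrite !U_const.
have inC : v a <= sup SC.
  apply: (sup_upper_bound hsC); exists s, (pm (fun _ => a)); split => //; split => //.
  by rewrite U_const.
move: hW; rewrite hval => hW.
lra.
Qed.


Lemma dir2 : sup SP <= sup SC -> sup SP <= sup SPP.
Proof.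
move=> hle.
have [G [G0 hG]] := const_G.
have [eta [eta0 heta]] := const_eta.
have [a0 [ha0 [hR0 [hS0 [hp0 hU0]]]]] := babble.
have hva0 : v a0 <= sup SPP.
  by apply: (sup_upper_bound hsPP); exists (cmsg m0), (pm (fun _ => a0)); rewrite hU0.
suff : sup SP <= v a0 by move=> h; apply: le_trans h hva0.
apply/ler_addgt0Pr => del del0.
pose c := Num.min eta 1.
have c0 : 0 < c by rewrite lt_min eta0 ltr01.
have ceta : c <= eta by rewrite ge_min lexx.
have c1 : c <= 1 by rewrite ge_min lexx orbT.
clearbody c.
pose d := Num.min del (G * c / 2).
have d0 : 0 < d by rewrite lt_min del0 !mulr_gt0 ?invr_gt0 ?ltr0n.
have ddel : d <= del by rewrite ge_min lexx.
have dG : d <= G * c / 2 by rewrite ge_min lexx orbT.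
clearbody d.
have [k [s [r [hSBR [hRBR ->]]]] hk] := sup_adherent d0 hsC.
have [hs [hr hsbr]] := hSBR.
set K := U mu0 V s r in hk *.
have h : forall m, exists t, (forall c, gen s m (u c) <= gen s m (u t)) /\
    (forall t', (forall c, gen s m (u c) <= gen s m (u t')) -> v t' <= v t).
  move=> m.
  have [b0 [_ hb0]] := @argmax_fin R A (fun _ => True) (fun b => gen s m (u b)) (ex_intro _ aI I).
  have [t [ht1 ht2]] := @argmax_fin R A (fun t => forall c, gen s m (u c) <= gen s m (u t)) v
    (ex_intro _ b0 (fun c => hb0 c I)).
  by exists t.
case: (choice h) => f hf'.
have hf1 : forall m b, gen s m (u b) <= gen s m (u (f m)) by move=> m; case: (hf' m).
have hf2 : forall m b, (forall c, gen s m (u c) <= gen s m (u b)) -> v b <= v (f m).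
  by move=> m; case: (hf' m).
pose val := fun m => \sum_(a : A) r m a * v a.
have hvalf : forall m, val m <= v (f m).
  move=> m; rewrite /val -[X in _ <= X]mul1r; case: (hr m) => h0 hsum1.
  rewrite -hsum1 mulr_suml; apply: ler_sum => a _.
  have [->|hra] := eqVneq (r m a) 0; first by rewrite !mul0r.
  apply: ler_wpM2l; first exact: h0.
  apply: hf2 => c'; rewrite (RBR_support hRBR hf1 hra); exact: hf1.
have hvalk : forall m, val m <= K.
  move=> m; have := hsbr _ (cmsg_msg m); rewrite U_transp.
  by under eq_bigr do rewrite mass_cmsg; rewrite sum_ind_mul.
have hkeq : K = \sum_(m : M) mass s m * val m by rewrite /K U_transp.
have hused : forall m, mass s m != 0 -> val m = K.
  move=> m hm.
  have hz : \sum_(m : M) mass s m * (K - val m) = 0.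
    under eq_bigr do rewrite mulrBr.
    by rewrite sumrB -mulr_suml mass_sum // mul1r -hkeq subrr.
  have : mass s m * (K - val m) = 0.
    apply: (psumr_eq0P _ hz) => // i _; apply: mulr_ge0; first exact: mass_ge0.
    by rewrite subr_ge0.
  by move=> /eqP; rewrite mulf_eq0 (negbTE hm) /= subr_eq0 => /eqP <-.
have hPb : \sum_(m : M) mass s m * v (f m) <= sup SP.
  apply: (sup_upper_bound hsP); exists s, (pm f); split; last by rewrite U_pm.
  exact: pointwise_RBR.
pose high := fun m => K + G <= v (f m).
pose H := \sum_(m : M) (if high m then mass s m else 0).
have hHG : H * G < d.
  apply: (@le_lt_trans _ _ (\sum_(m : M) mass s m * (v (f m) - val m))).
    rewrite /H mulr_suml; apply: ler_sum => m _.
    case: ifP => hh.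
      apply: ler_wpM2l; first exact: mass_ge0.
      have := hvalk m; rewrite /high in hh; lra.
    rewrite mul0r; apply: mulr_ge0; first exact: mass_ge0.
    by rewrite subr_ge0.
  under eq_bigr do rewrite mulrBr.
  rewrite sumrB -hkeq; lra.
have [m1 [hm1 hh1]] : exists m1, mass s m1 != 0 /\ ~~ high m1.
  have [//|hn] := pselect (exists m1, mass s m1 != 0 /\ ~~ high m1).
  exfalso.
  have hH1 : H = 1.
    rewrite /H -(mass_sum hs); apply: eq_bigr => m _; case: ifP => // hh.
    have [//|hm] := eqVneq (mass s m) 0.
    by exfalso; apply: hn; exists m; rewrite hh.
  move: hHG; rewrite hH1 mul1r => hGd.
  have : G * c <= G by rewrite -[X in _ <= X]mulr1 ler_pM2l.
  lra.
pose a := f m1.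
have ha1 : K <= v a by rewrite -(hused m1 hm1); exact: hvalf.
have ha2 : v a < K + G by rewrite ltNge.
have hsame : forall m, mass s m != 0 -> ~~ high m -> f m = a.
  move=> m hm hh; apply/eqP; apply: contraT => hne.
  have := hG _ _ hne.
  have hm1' : K <= v (f m) by rewrite -(hused m hm); exact: hvalf.
  have hm2' : v (f m) < K + G by rewrite ltNge.
  have : `|v (f m) - v a| < G by rewrite ltr_norml; apply/andP; split; lra.
  move=> h1 h2; have := lt_le_trans h1 h2; by rewrite ltxx.
have hD : - H <= \sum_(w : Om) mu0 w * u a w - \sum_(w : Om) mu0 w * u a0 w.
  rewrite -!(gen_sum _ hs) -sumrB /H -sumrN; apply: ler_sum => m _.
  have [hm0|hm] := eqVneq (mass s m) 0.
    by rewrite !gen_mass0 // subrr; case: ifP => _; rewrite ?hm0 oppr0.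
  case: ifP => hh.
    have /andP[? ?] := gen_bounds m hs (hu a).
    have /andP[? ?] := gen_bounds m hs (hu a0).
    lra.
  by rewrite -(hsame m hm (negbT hh)) oppr0 subr_ge0.
have hHc : H < c / 2.
  rewrite -(ltr_pM2r G0); lra.
have ha0a : a = a0.
  apply/eqP; apply: contraT => hne.
  have hC : (0 < #|finset (fun _ : Om => true)|)%N by apply/card_gt0P; exists wI; rewrite inE.
  have := heta _ _ _ hC hne.
  rewrite (eq_bigl (fun _ => true)); last by move=> w; rewrite inE.
  under eq_bigr do rewrite mulrBr.
  rewrite sumrB ler0_norm; last by rewrite subr_le0; exact: ha0.
  lra.
rewrite -ha0a; lra.
Qed.

Lemma equiv_env : commitment_valuable M mu0 V u <-> values_randomization M mu0 V u.
Proof.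
rewrite /commitment_valuable /values_randomization.
change (sup SC < sup SP <-> sup SPP < sup SP).
split => h; rewrite ltNge; apply/negP => h'.
  by have := dir1 h'; rewrite leNgt h.
by have := dir2 h'; rewrite leNgt h.
Qed.

End Env.
End Game.

Section Null.
Variables (R : realType) (I : finType) (iI : I).
Implicit Types N : (I -> R) -> Prop.

Lemma vol0 : box_vol (fun _ : I => 0 : R) (fun _ => 0) = 0.
Proof. by rewrite /box_vol (bigD1 iI) //= subrr mul0r. Qed.

Lemma box_vol_ge0 (a b : I -> R) : (forall i, a i <= b i) -> 0 <= box_vol a b.
Proof. by move=> h; apply: prodr_ge0 => i _; rewrite subr_ge0. Qed.

Lemma null_mono N1 N2 : (forall x, N1 x -> N2 x) -> lebesgue_null N2 -> lebesgue_null N1.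
Proof.
move=> h12 h2 eps eps0; have [a [b [hab [hc hs]]]] := h2 eps eps0.
by exists a, b; split => //; split => // x /h12 /hc.
Qed.

Lemma null_empty : lebesgue_null (fun _ : I -> R => False).
Proof.
move=> eps eps0; exists (fun _ _ => 0), (fun _ _ => 0); split => //; split => //.
move=> n; rewrite big1 ?ltW // => k _; exact: vol0.
Qed.

Lemma sum_widen (F : nat -> R) n m : (n <= m)%N -> (forall k, 0 <= F k) ->
  \sum_(k < n) F k <= \sum_(k < m) F k.
Proof.
move=> hnm h0; rewrite (big_ord_widen m F hnm) [X in _ <= X](bigID (fun i : 'I_m => (i < n)%N)) /=.
by rewrite lerDl; apply: sumr_ge0.
Qed.

Lemma sum_double (F : nat -> R) n :
  \sum_(k < n.*2) F k = \sum_(j < n) F j.*2 + \sum_(j < n) F j.*2.+1.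
Proof.
elim: n => [|n IH]; first by rewrite !big_ord0 addr0.
rewrite doubleS !big_ord_recr /= IH; ring.
Qed.

Lemma null_union N1 N2 : lebesgue_null N1 -> lebesgue_null N2 ->
  lebesgue_null (fun x => N1 x \/ N2 x).
Proof.
move=> h1 h2 eps eps0.
have e2 : 0 < eps / 2 by rewrite divr_gt0 ?ltr0n.
have [a1 [b1 [hab1 [hc1 hs1]]]] := h1 _ e2.
have [a2 [b2 [hab2 [hc2 hs2]]]] := h2 _ e2.
exists (fun k => if odd k then a2 k./2 else a1 k./2).
exists (fun k => if odd k then b2 k./2 else b1 k./2).
split; first by move=> k i; case: ifP.
split.
  move=> x [/hc1 [k hk]|/hc2 [k hk]].
    by exists k.*2; rewrite odd_double half_double.
  exists k.*2.+1; rewrite /= odd_double /=.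
  by rewrite uphalf_double.
move=> n.
pose F := fun k => box_vol (if odd k then a2 k./2 else a1 k./2)
                           (if odd k then b2 k./2 else b1 k./2).
have F0 : forall k, 0 <= F k.
  by move=> k; apply: box_vol_ge0 => i; rewrite /F; case: ifP.
apply: (le_trans (sum_widen (m := n.*2) _ F0)); first by rewrite -addnn leq_addr.
rewrite sum_double.
have -> : \sum_(j < n) F j.*2 = \sum_(j < n) box_vol (a1 j) (b1 j).
  by apply: eq_bigr => j _; rewrite /F odd_double half_double.
have -> : \sum_(j < n) F j.*2.+1 = \sum_(j < n) box_vol (a2 j) (b2 j).
  by apply: eq_bigr => j _; rewrite /F /= odd_double /= uphalf_double.
have := hs1 n; have := hs2 n; lra.
Qed.

Lemma null_seq (T : eqType) (Nt : T -> (I -> R) -> Prop) (s : seq T) :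
  (forall t, lebesgue_null (Nt t)) -> lebesgue_null (fun x => exists t, t \in s /\ Nt t x).
Proof.
move=> h; elim: s => [|t s IH].
  by apply: null_mono null_empty => x [t []].
apply: null_mono (null_union (h t) IH) => x [t' []]; rewrite inE => /orP [/eqP -> H|hs H].
  by left.
by right; exists t'.
Qed.

Lemma null_fin (T : finType) (Nt : T -> (I -> R) -> Prop) :
  (forall t, lebesgue_null (Nt t)) -> lebesgue_null (fun x => exists t, Nt t x).
Proof.
move=> h; apply: null_mono (null_seq (enum T) h) => x [t H].
by exists t; rewrite mem_enum.
Qed.


Lemma cell_exists (y : R) (n : nat) : (0 < n)%N -> 0 <= y <= 1 ->
  exists j : 'I_n, (j%:R / n%:R <= y) && (y <= (j.+1)%:R / n%:R).
Proof.
case: n => [//|n] _ /andP [y0 y1].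
have n0 : 0 < (n.+1)%:R :> R by rewrite ltr0n.
have yn0 : 0 <= y * (n.+1)%:R by rewrite mulr_ge0 ?ler0n.
have /andP [t1 t2] := truncn_itv yn0.
set t := Num.truncn _ in t1 t2.
have [tn|tn] := ltnP t n.+1.
  exists (Ordinal tn); rewrite /= ler_pdivrMr // ler_pdivlMr // t1 /=.
  exact: ltW.
exists ord_max; rewrite /= ler_pdivrMr // ler_pdivlMr //.
have yge : (n.+1)%:R <= y * (n.+1)%:R.
  by apply: le_trans t1; rewrite ler_nat.
have y1' : y = 1.
  apply/le_anti; rewrite y1 /=; by rewrite -(ler_pM2r n0) mul1r.
rewrite y1' mul1r lexx andbT ler_nat; exact: leqnSn.
Qed.

Lemma null_hyper (c : I -> R) (i0 : I) : c i0 != 0 ->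
  lebesgue_null (fun x : I -> R => unit_cube x /\ \sum_(i : I) c i * x i = 0).
Proof.
move=> hc0.
have ac0 : 0 < `|c i0| by rewrite normr_gt0.
pose K := (\sum_(i : I) `|c i|) / `|c i0|.
have K1 : 1 <= K.
  rewrite /K ler_pdivlMr // mul1r (bigD1 i0) //= lerDl.
  by apply: sumr_ge0 => i _.
have K0 : 0 < K by apply: lt_le_trans K1; exact: ltr01.
move=> eps eps0.
pose n := (Num.truncn (2 * K / eps)).+1.
have n0 : (0 < n)%N by [].
have nR0 : 0 < n%:R :> R by rewrite ltr0n.
have hn : 2 * K / n%:R <= eps.
  have h0 : 0 <= 2 * K / eps by apply: divr_ge0; [apply: mulr_ge0 => //; apply: ltW|apply: ltW].
  have /andP [_ t2] := truncn_itv h0.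
  rewrite ler_pdivrMr //; rewrite ltr_pdivrMr // in t2.
  by apply: ltW; rewrite [eps * _]mulrC; exact: t2.
clearbody n.
pose T := {ffun I -> 'I_n}.
pose w := fun i : I => if i == i0 then 2 * K / n%:R / n%:R else 1 / n%:R.
have w0 : forall i, 0 <= w i.
  move=> i; rewrite /w; case: ifP => _; last by rewrite divr_ge0 ?ler0n.
  by rewrite !divr_ge0 ?ler0n // mulr_ge0 // ltW.
pose center := fun g : I -> 'I_n =>
  - (\sum_(i | i != i0) c i * ((g i)%:R / n%:R)) / c i0.
pose lo := fun (g : I -> 'I_n) i =>
  (if i == i0 then center g - K / n%:R else 0) + w i * (g i)%:R.
pose hi := fun (g : I -> 'I_n) i => lo g i + w i.
pose a := fun k : nat => if (insub k : option 'I_#|T|) is Some j then lo (enum_val j) else fun _ => 0.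
pose b := fun k : nat => if (insub k : option 'I_#|T|) is Some j then hi (enum_val j) else fun _ => 0.
have hab : forall k i, a k i <= b k i.
  move=> k i; rewrite /a /b; case: insub => [j|//]; by rewrite /hi lerDl.
exists a, b; split => //.
split.
  move=> x [hx hsum].
  have hcell : forall i, exists j : 'I_n, (j%:R / n%:R <= x i) && (x i <= (j.+1)%:R / n%:R).
    by move=> i; apply: cell_exists.
  case: (choice hcell) => h hh.
  have hhi : forall i, (h i)%:R / n%:R <= x i <= (h i)%:R / n%:R + n%:R^-1.
    move=> i; have /andP [p1 p2] := hh i; rewrite p1 /=.
    by rewrite -natr1 mulrDl mul1r in p2.
  have hx0 : x i0 = - (\sum_(i | i != i0) c i * x i) / c i0.
    move: hsum; rewrite (bigD1 i0) //= => /eqP; rewrite addrC addr_eq0 => /eqP ->.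
    by rewrite opprK [c i0 * _]mulrC mulfK.
  have e : x i0 - center h = - (\sum_(i | i != i0) c i * (x i - (h i)%:R / n%:R)) / c i0.
    rewrite hx0 /center; under [in RHS]eq_bigr do rewrite mulrBr.
    rewrite sumrB; ring.
  have hdist : `|x i0 - center h| <= K / n%:R.
    rewrite e normrM normrN normfV ler_pdivrMr //.
    apply: (le_trans (ler_norm_sum _ _ _)).
    apply: (@le_trans _ _ (\sum_(i | i != i0) `|c i| / n%:R)).
      apply: ler_sum => i _; rewrite normrM; apply: ler_wpM2l; first exact: normr_ge0.
      have /andP [p1 p2] := hhi i.
      rewrite ger0_norm; [lra|lra].
    apply: (@le_trans _ _ ((\sum_(i : I) `|c i|) / n%:R)).
      rewrite -mulr_suml; apply: ler_wpM2r; first by rewrite invr_ge0 ler0n.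
      by rewrite [X in _ <= X](bigD1 i0) //= lerDr.
    rewrite /K le_eqVlt; apply/orP; left; apply/eqP.
    field; apply/andP; split; [exact: lt0r_neq0|rewrite lt0r_neq0 //].
  have q0 : 0 < 2 * K / n%:R by rewrite divr_gt0 // mulr_gt0 // ltr0n.
  pose y := (x i0 - (center h - K / n%:R)) / (2 * K / n%:R).
  have hy : 0 <= y <= 1.
    move: hdist; rewrite ler_norml => /andP [d1 d2].
    rewrite /y divr_ge0 /=; last exact: ltW.
      by rewrite ler_pdivrMr // mul1r; lra.
    lra.
  have [j0 /andP [hj1 hj2]] := cell_exists n0 hy.
  pose g : T := [ffun i => if i == i0 then j0 else h i].
  have hcg : center g = center h.
    rewrite /center; congr (- _ / _); apply: eq_bigr => i hin.
    by rewrite ffunE (negbTE hin).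
  exists (enum_rank g : nat); rewrite /a /b valK enum_rankK.
  move=> i; rewrite /hi /lo ffunE.
  have [->|ni] := eqVneq i i0.
    rewrite hcg /w eqxx.
    rewrite /y ler_pdivlMr // in hj1.
    rewrite /y ler_pdivrMr // in hj2.
    rewrite -natr1 mulrDl mul1r in hj2.
    have e1 : 2 * K / n%:R / n%:R * j0%:R = j0%:R / n%:R * (2 * K / n%:R) by ring.
    have e2 : 2 * K / n%:R / n%:R = n%:R^-1 * (2 * K / n%:R) by ring.
    rewrite e1 e2; apply/andP; split; lra.
  rewrite /w ?(negbTE ni) /= add0r mul1r mulrC.
  have /andP [p1 p2] := hhi i.
  by apply/andP.
move=> N.
pose F := fun k : nat => box_vol (a k) (b k).
have F0 : forall k, 0 <= F k by move=> k; apply: box_vol_ge0.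
pose V0 := \prod_(i : I) w i.
have Fk : forall k, F k = if (k < #|T|)%N then V0 else 0.
  move=> k; rewrite /F /a /b; case: ltnP => hk.
    rewrite (insubT (fun k => k < #|T|)%N hk) /box_vol; apply: eq_bigr => i _.
    by rewrite /hi addrC addKr.
  rewrite insubN; last by rewrite -leqNgt.
  exact: vol0.
have hV : #|T|%:R * V0 = 2 * K / n%:R.
  have -> : V0 = (n%:R^-1) ^+ #|I| * (2 * K / n%:R).
    rewrite /V0 (eq_bigr (fun i => n%:R^-1 * (if i == i0 then 2 * K / n%:R else 1))); last first.
      by move=> i _; rewrite /w; case: ifP => _; ring.
    rewrite big_split /= prodr_const; congr (_ * _).
    by rewrite (bigD1 i0) //= eqxx big1 ?mulr1 // => i /negbTE ->.
  rewrite card_ffun card_ord natrX mulrA -exprMn mulfV ?lt0r_neq0 // expr1n mul1r.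
  done.
have hsT : \sum_(k < #|T|) F k = #|T|%:R * V0.
  rewrite (eq_bigr (fun _ => V0)); last by move=> k _; rewrite Fk ltn_ord.
  by rewrite sumr_const card_ord mulr_natl.
have [hN|hN] := leqP N #|T|.
  apply: (le_trans (sum_widen hN F0)); by rewrite hsT hV.
have -> : \sum_(k < N) box_vol (a k) (b k) = \sum_(k < #|T|) F k.
  rewrite (big_ord_widen N F (ltnW hN)) [LHS](bigID (fun i : 'I_N => (i < #|T|)%N)) /=.
  rewrite [X in _ + X]big1 ?addr0 // => k hk.
  by rewrite /F -/(F k) Fk (negbTE hk).
by rewrite hsT hV.
Qed.

End Null.

Lemma sum_indI (R : realType) (I : finType) (j : I) (x : I -> R) :
  \sum_(i : I) (i == j)%:R * x i = x j.
Proof.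
rewrite (bigD1 j) //= eqxx mul1r big1 ?addr0 // => i /negbTE ->.
by rewrite mul0r.
Qed.

Unset Implicit Arguments.
Set Strict Implicit.

Theorem theorem4 (R : realType) (A Om M : finType) (mu0 : Om -> R)
  (hA : (0 < #|A|)%N) (hOm : (0 < #|Om|)%N)
  (hmu0 : forall w, 0 < mu0 w) (hmu1 : \sum_(w : Om) mu0 w = 1)
  (hM : (maxn #|Om| #|A| < #|M|)%N) :
  exists E : (env_coord A Om -> R) -> Prop,
    full_measure_in_cube E /\
    forall x, E x ->
      (commitment_valuable M mu0 (env_v x) (env_uR x) <->
       values_randomization M mu0 (env_v x) (env_uR x)).
Proof.
have /card_gt0P [m0 _] : (0 < #|M|)%N by apply: leq_ltn_trans hM.
have /card_gt0P [aI _] := hA.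
have /card_gt0P [wI _] := hOm.
pose E := fun x : env_coord A Om -> R => unit_cube x /\
  (forall a a', a != a' -> x (inl a) != x (inl a')) /\
  (forall (C : {set Om}) a a', (0 < #|C|)%N -> a != a' ->
     \sum_(w in C) mu0 w * (x (inr (a, w)) - x (inr (a', w))) != 0).
exists E; split; last first.
  move=> x [hx [hinj hgen]].
  exact: (@equiv_env R A Om M mu0 hmu0 hmu1 (fun a => x (inl a)) (fun a w => x (inr (a, w)))
    (fun a => hx (inl a)) (fun a w => hx (inr (a, w))) hinj hgen m0 aI wI).
split; first by move=> x [].
pose c1 := fun (a a' : A) (i : env_coord A Om) => ((i == inl a)%:R - (i == inl a')%:R) : R.
pose c2 := fun (C : {set Om}) (a a' : A) (i : env_coord A Om) =>
  (match i with inl _ => 0 | inr (b, w) => (w \in C)%:R * mu0 w * ((b == a)%:R - (b == a')%:R) end : R).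
have e1 : forall a a' x, \sum_(i : env_coord A Om) c1 a a' i * x i = x (inl a) - x (inl a').
  move=> a a' x; rewrite /c1; under eq_bigr do rewrite mulrBl.
  by rewrite sumrB !sum_indI.
have e2 : forall C a a' x, \sum_(i : env_coord A Om) c2 C a a' i * x i =
    \sum_(w in C) mu0 w * (x (inr (a, w)) - x (inr (a', w))).
  move=> C a a' x; rewrite big_sumType /= big1 ?add0r; last by move=> ? _; rewrite mul0r.
  rewrite (eq_bigr (fun p : A * Om => (p.2 \in C)%:R * mu0 p.2 *
     ((p.1 == a)%:R * x (inr (p.1, p.2)) - (p.1 == a')%:R * x (inr (p.1, p.2))))); last first.
    by move=> [b w] _ /=; ring.
  rewrite -(pair_bigA _ (fun b w => (w \in C)%:R * mu0 w *
     ((b == a)%:R * x (inr (b, w)) - (b == a')%:R * x (inr (b, w))))) /=.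
  rewrite exchange_big [RHS]big_mkcond /=; apply: eq_bigr => w _.
  rewrite -mulr_sumr sumrB (sum_indI a (fun b => x (inr (b, w)))).
  rewrite (sum_indI a' (fun b => x (inr (b, w)))).
  by case: (w \in C) => /=; rewrite ?mul1r ?mul0r.
pose Nt := fun (t : ((A * A) + ({set Om} * A * A))%type) (x : env_coord A Om -> R) =>
  match t with
  | inl (a, a') => a != a' /\ unit_cube x /\ \sum_(i : env_coord A Om) c1 a a' i * x i = 0
  | inr (C, a, a') => (0 < #|C|)%N /\ a != a' /\ unit_cube x /\
       \sum_(i : env_coord A Om) c2 C a a' i * x i = 0
  end.
apply: (null_mono (N2 := fun x => exists t, Nt t x)).
  move=> x [hx hE]; apply: (contra_notP _ hE) => hn.
  split => //; split.
    move=> a a' ne; apply/negP => /eqP e; apply: hn; exists (inl (a, a')).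
    by rewrite /Nt e1 e subrr.
  move=> C a a' hC ne; apply/negP => /eqP e; apply: hn; exists (inr (C, a, a')).
  by rewrite /Nt e2 e.
apply: (null_fin (inl aI)) => [[[a a']|[[C a] a']]]; rewrite /Nt.
  have [ne|eq] := boolP (a != a'); last first.
    by apply: null_mono (null_empty (inl aI)) => x [] //.
  apply: null_mono (@null_hyper R _ (inl aI) (c1 a a') (inl a) _) => [x [_ h] //|].
  have hne : (inl a == inl a' :> env_coord A Om) = false.
    by apply/negbTE; apply: contra ne => /eqP [->].
  by rewrite /c1 eqxx hne subr0 oner_eq0.
have [hC|hC] := boolP (0 < #|C|)%N; last first.
  by apply: null_mono (null_empty (inl aI)) => x [] //.
have [ne|eq] := boolP (a != a'); last first.
  by apply: null_mono (null_empty (inl aI)) => x [_ []] //.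
have /card_gt0P [w hw] := hC.
apply: null_mono (@null_hyper R _ (inl aI) (c2 C a a') (inr (a, w)) _) => [x [_ [_ h]] //|].
rewrite /c2 hw eqxx (negbTE ne) /= subr0 mulr1 mul1r.
exact: lt0r_neq0.
Qed.
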